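(* Let $\mathbf k$ be an algebraically closed field of characteristic zero, $n\geq 1$, $\zeta\in\mathbf k$, and let $\mathcal D_{\zeta,n}$ be the monoidal category defined below. Let $k\in\mathbb N$ be divisible by $n$, say $k=ln$. Then $\mathrm{Hom}_{\mathcal D_{\zeta,n}}(k,0)$ is the $\mathbf k$-span of $f_n^{\otimes l}:k\to 0$.
   Context: $\mathcal D_{\zeta,n}$ is the strict $\mathbf k$-linear monoidal category whose objects are the natural numbers $k\in\mathbb N$ (thought of as $k$ points), with tensor product $k\otimes l=k+l$ on objects and unit $0$, and whose morphisms are generated under composition, tensor product and $\mathbf k$-linear combinations by the identity $\mathrm{id}_1$ of $1$ and two morphisms $f_n:n\to 0$ and $g_n:0\to n$, subject to the relations $f_n\circ g_n=\mathrm{id}_0$, $g_n\circ f_n=\mathrm{id}_n$, and $\mathrm{id}_1\otimes f_n=\zeta\,(f_n\otimes\mathrm{id}_1)$ as morphisms $n+1\to 1$. *)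

(* Defs.v *)
(* Free k-linear strict monoidal category D_{zeta,n},
   presented by generators and relations, built syntactically. *)
From HB Require Import structures.
From mathcomp Require Import all_boot all_order all_algebra.
Set Implicit Arguments. Unset Strict Implicit. Unset Printing Implicit Defensive.
Import GRing.Theory.
Local Open Scope ring_scope.

Inductive term : Type :=
  | Id of nat
  | Fg
  | Gg
  | Comp of term & term       (* Comp t s = t \o s *)
  | Tens of term & term.

Definition term_dec (x y : term) : {x = y} + {x <> y}.
Proof. decide equality; by case: (eqVneq n n0) => [->|h]; [left|right; apply/eqP]. Defined.
HB.instance Definition _ := hasDecEq.Build term (compareP term_dec).

Fixpoint typ (n : nat) (t : term) : option (nat * nat) :=
  match t with
  | Id k => Some (k, k)
  | Fg => Some (n, 0%N)
  | Gg => Some (0%N, n)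
  | Comp t1 s1 =>
      match typ n s1, typ n t1 with
      | Some (a, b), Some (b', c) => if b == b' then Some (a, c) else None
      | _, _ => None
      end
  | Tens s1 t1 =>
      match typ n s1, typ n t1 with
      | Some (a, b), Some (c, d) => Some ((a + c)%N, (b + d)%N)
      | _, _ => None
      end
  end.

Section Cat.
Variables (K : fieldType) (n : nat) (zeta : K).

(* Formal K-linear combinations of terms. *)
Definition lc := seq (K * term).
Definition wt (a b : nat) (s : lc) : bool :=
  all (fun p => typ n p.2 == Some (a, b)) s.
Definition coef (s : lc) (t : term) : K := \sum_(p <- s | p.2 == t) p.1.
Definition scale (c : K) (s : lc) : lc := [seq (c * p.1, p.2) | p <- s].
Definition compl (u : term) (s : lc) : lc := [seq (p.1, Comp u p.2) | p <- s].
Definition compr (s : lc) (u : term) : lc := [seq (p.1, Comp p.2 u) | p <- s].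
Definition tensl (s : lc) (u : term) : lc := [seq (p.1, Tens p.2 u) | p <- s].
Definition tensr (u : term) (s : lc) : lc := [seq (p.1, Tens u p.2) | p <- s].
Definition rel2 (t t' : term) : lc := [:: (1, t); (-1, t')].

(* nul a b s : the formal combination s of morphisms a -> b is zero in
   D_{zeta,n}, i.e. s lies in the smallest linear "tensor ideal" containing
   the axioms of a strict monoidal category and the defining relations. *)
Inductive nul : nat -> nat -> lc -> Prop :=
  | nul_add a b s t : nul a b s -> nul a b t -> nul a b (s ++ t)
  | nul_scale a b c s : nul a b s -> nul a b (scale c s)
  | nul_ext a b s s' : wt a b s' -> coef s =1 coef s' -> nul a b s -> nul a b s'
  | nul_compl a b c u s : typ n u = Some (b, c) -> nul a b s -> nul a c (compl u s)
  | nul_compr a b c u s : typ n u = Some (a, b) -> nul b c s -> nul a c (compr s u)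
  | nul_tensl a b c d s u : typ n u = Some (c, d) -> nul a b s ->
      nul (a + c) (b + d) (tensl s u)
  | nul_tensr a b c d u s : typ n u = Some (c, d) -> nul a b s ->
      nul (c + a) (d + b) (tensr u s)
  | ax_assoc a b c d r s t : typ n r = Some (a, b) -> typ n s = Some (b, c) ->
      typ n t = Some (c, d) -> nul a d (rel2 (Comp (Comp t s) r) (Comp t (Comp s r)))
  | ax_idl a b t : typ n t = Some (a, b) -> nul a b (rel2 (Comp (Id b) t) t)
  | ax_idr a b t : typ n t = Some (a, b) -> nul a b (rel2 (Comp t (Id a)) t)
  | ax_tassoc a b c d e f s t u : typ n s = Some (a, b) -> typ n t = Some (c, d) ->
      typ n u = Some (e, f) ->
      nul (a + c + e) (b + d + f) (rel2 (Tens (Tens s t) u) (Tens s (Tens t u)))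
  | ax_unitl a b t : typ n t = Some (a, b) -> nul a b (rel2 (Tens (Id 0) t) t)
  | ax_unitr a b t : typ n t = Some (a, b) -> nul a b (rel2 (Tens t (Id 0)) t)
  | ax_tid a b : nul (a + b) (a + b) (rel2 (Tens (Id a) (Id b)) (Id (a + b)))
  | ax_interchange a b c a' b' c' s s' t t' :
      typ n s' = Some (a, b) -> typ n s = Some (b, c) ->
      typ n t' = Some (a', b') -> typ n t = Some (b', c') ->
      nul (a + a') (c + c')
        (rel2 (Comp (Tens s t) (Tens s' t')) (Tens (Comp s s') (Comp t t')))
  | rel_fg : nul 0 0 (rel2 (Comp Fg Gg) (Id 0))
  | rel_gf : nul n n (rel2 (Comp Gg Fg) (Id n))
  | rel_twist : nul (1 + n) 1 [:: (1, Tens (Id 1) Fg); (- zeta, Tens Fg (Id 1))].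

(* Hom_{D_{zeta,n}}(a, b): well-typed formal combinations modulo nul;
   two combinations s, s' of type a -> b are equal morphisms iff
   nul a b (s ++ scale (-1) s'). *)
Definition hom_eq (a b : nat) (s s' : lc) : Prop := nul a b (s ++ scale (-1) s').

End Cat.

Fixpoint ftens (l : nat) : term :=
  match l with 0 => Id 0 | l'.+1 => Tens Fg (ftens l') end.

(* Main.v *)
Require Import Defs.
From mathcomp Require Import all_boot all_order all_algebra.
From mathcomp Require Import ring.
Set Implicit Arguments. Unset Strict Implicit. Unset Printing Implicit Defensive.
Import GRing.Theory.
Local Open Scope ring_scope.

Section Proof.
Variables (K : fieldType) (n : nat) (zeta : K).
Local Notation typ := (typ n).
Local Notation nul := (nul n zeta).
Local Notation wt := (wt n).

Definition dl (t x : term) : K := (t == x)%:R.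

Lemma coef_nil x : coef ([::] : lc K) x = 0.
Proof. by rewrite /coef big_nil. Qed.
Lemma coef_cons (p : K * term) s x : coef (p :: s) x = p.1 * dl p.2 x + coef s x.
Proof. by rewrite /coef big_cons /dl; case: eqP => _; rewrite ?mulr1 ?mulr0 ?add0r. Qed.
Lemma coef_cat (s s' : lc K) x : coef (s ++ s') x = coef s x + coef s' x.
Proof. by rewrite /coef big_cat. Qed.
Lemma coef_scale c (s : lc K) x : coef (scale c s) x = c * coef s x.
Proof.
elim: s => [|p s IH]; first by rewrite /= coef_nil mulr0.
by rewrite /= !coef_cons IH /= mulrDr mulrA.
Qed.

Lemma nul_wt a b s : nul a b s -> wt a b s.
Proof.
elim=> {a b s}.
- by move=> a b s t _ h1 _ h2; rewrite /wt all_cat; apply/andP.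
- by move=> a b c s _ h; rewrite /wt all_map.
- by [].
- move=> a b c u s hu _ h; rewrite /wt all_map; apply: sub_all h => p /= /eqP ->.
  by rewrite hu eqxx.
- move=> a b c u s hu _ h; rewrite /wt all_map; apply: sub_all h => p /= /eqP ->.
  by rewrite hu eqxx.
- move=> a b c d s u hu _ h; rewrite /wt all_map; apply: sub_all h => p /= /eqP ->.
  by rewrite hu.
- move=> a b c d u s hu _ h; rewrite /wt all_map; apply: sub_all h => p /= /eqP ->.
  by rewrite hu.
- by move=> a b c d r s t hr hs ht; rewrite /wt /= hr hs ht !eqxx.
- by move=> a b t ht; rewrite /wt /= ht !eqxx.
- by move=> a b t ht; rewrite /wt /= ht !eqxx.
- by move=> a b c d e f s t u hs ht hu; rewrite /wt /= hs ht hu !addnA !eqxx.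
- by move=> a b t ht; rewrite /wt /= ht !eqxx.
- by move=> a b t ht; rewrite /wt /= ht !addn0 !eqxx.
- by move=> a b; rewrite /wt /= !eqxx.
- by move=> a b c a' b' c' s s' t t' h1 h2 h3 h4; rewrite /wt /= h1 h2 h3 h4 !eqxx.
- by rewrite /wt /= !eqxx.
- by rewrite /wt /= !eqxx.
- by rewrite /wt /= addnC !eqxx.
Qed.


Lemma wt_cons a b (p : K * term) (s : lc K) : wt a b (p :: s) = (typ p.2 == Some (a, b)) && wt a b s.
Proof. by []. Qed.

Lemma nul_lin a b s1 s2 k s' : nul a b s1 -> nul a b s2 -> wt a b s' ->
  (forall x, coef s' x = coef s1 x + k * coef s2 x) -> nul a b s'.
Proof.
move=> h1 h2 hw he; apply: (nul_ext hw _ (nul_add h1 (nul_scale k h2))).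
by move=> x; rewrite coef_cat coef_scale he.
Qed.

Lemma nul_lin1 a b s k s' : nul a b s -> wt a b s' ->
  (forall x, coef s' x = k * coef s x) -> nul a b s'.
Proof.
move=> h hw he; apply: (nul_ext hw _ (nul_scale k h)).
by move=> x; rewrite coef_scale he.
Qed.

Definition R t c u := exists a b, nul a b [:: (1, t); (- c, u)].

Lemma R_typ t c u : R t c u -> exists a b, typ t = Some (a, b) /\ typ u = Some (a, b).
Proof.
case=> a [b /nul_wt]; rewrite /wt /= andbT => /andP [/eqP h1 /eqP h2].
by exists a, b; split.
Qed.

Lemma nulR a b t c u : nul a b [:: (1, t); (- c, u)] -> R t c u.
Proof. by exists a, b. Qed.

Lemma R_refl t : typ t != None -> R t 1 t.
Proof.
case E: (typ t) => [[a b]|] // _.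
have := ax_idl zeta E => h.
apply: (nulR (nul_lin1 (k := 0) h _ _)); first by rewrite /wt /= E eqxx.
move=> x; rewrite !coef_cons coef_nil /=; ring.
Qed.

Lemma R_trans t c u d v : R t c u -> R u d v -> R t (c * d) v.
Proof.
move=> [a [b h1]] [a' [b' h2]].
have := nul_wt h1; have := nul_wt h2.
rewrite /wt /= !andbT => /andP [/eqP e1 /eqP e2] /andP [/eqP e3 /eqP e4].
move: e1; rewrite e4 => -[ea eb]; subst a' b'.
apply: (nulR (nul_lin (k := c) h1 h2 _ _)); first by rewrite /wt /= e3 e2 !eqxx.
move=> x; rewrite !coef_cons !coef_nil /=; ring.
Qed.

Lemma R_sym t c u : c != 0 -> R t c u -> R u c^-1 t.
Proof.
move=> hc [a [b h]]; have := nul_wt h.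
rewrite /wt /= !andbT => /andP [/eqP e1 /eqP e2].
apply: (nulR (nul_lin1 (k := - c^-1) h _ _)); first by rewrite /wt /= e1 e2 !eqxx.
move=> x; rewrite !coef_cons !coef_nil /=; field; exact: hc.
Qed.

Lemma R_eqc t c d u : c = d -> R t c u -> R t d u.
Proof. by move->. Qed.

Lemma R1l t u v c : R t 1 u -> R u c v -> R t c v.
Proof. by move=> h1 h2; rewrite -[c]mul1r; apply: R_trans h1 h2. Qed.
Lemma R1r t u v c : R t c u -> R u 1 v -> R t c v.
Proof. by move=> h1 h2; rewrite -[c]mulr1; apply: R_trans h1 h2. Qed.
Lemma R1s t u : R t 1 u -> R u 1 t.
Proof. by move=> h; rewrite -invr1; apply: R_sym (oner_neq0 _) h. Qed.

Lemma R_compl w t c u : R t c u -> (typ (Comp w t) != None) -> R (Comp w t) c (Comp w u).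
Proof.
move=> [a [b h]]; have := nul_wt h.
rewrite /wt /= !andbT => /andP [/eqP e1 /eqP e2].
rewrite /= e1; case E: (typ w) => [[b' d]|] //; case: (b =P b') => [eb _|]//; subst b'.
exact: (nulR (nul_compl E h)).
Qed.

Lemma R_compr w t c u : R t c u -> (typ (Comp t w) != None) -> R (Comp t w) c (Comp u w).
Proof.
move=> [a [b h]]; have := nul_wt h.
rewrite /wt /= !andbT => /andP [/eqP e1 /eqP e2].
rewrite /= e1; case E: (typ w) => [[a' b']|] //; case: (b' =P a) => [eb _|]//; subst b'.
exact: (nulR (nul_compr E h)).
Qed.

Lemma R_tensl w t c u : R t c u -> (typ w != None) -> R (Tens t w) c (Tens u w).
Proof.
move=> [a [b h]]; case E: (typ w) => [[c' d]|] // _.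
exact: (nulR (nul_tensl E h)).
Qed.

Lemma R_tensr w t c u : R t c u -> (typ w != None) -> R (Tens w t) c (Tens w u).
Proof.
move=> [a [b h]]; case E: (typ w) => [[c' d]|] // _.
exact: (nulR (nul_tensr E h)).
Qed.

Lemma R_assoc r s t : typ (Comp t (Comp s r)) != None ->
  R (Comp (Comp t s) r) 1 (Comp t (Comp s r)).
Proof.
rewrite /=; case Er: (typ r) => [[a b]|] //; case Es: (typ s) => [[b' c]|] //.
case: (b =P b') => [eb|]//; subst b'; case Et: (typ t) => [[c' d]|] //; case: (c =P c') => [ec _|]//; subst c'.
exact: (nulR (ax_assoc zeta Er Es Et)).
Qed.

Lemma R_idl t a b : typ t = Some (a, b) -> R (Comp (Id b) t) 1 t.
Proof. by move=> h; apply: nulR (ax_idl zeta h). Qed.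
Lemma R_idr t a b : typ t = Some (a, b) -> R (Comp t (Id a)) 1 t.
Proof. by move=> h; apply: nulR (ax_idr zeta h). Qed.
Lemma R_tassoc s t u : typ s != None -> typ t != None -> typ u != None ->
  R (Tens (Tens s t) u) 1 (Tens s (Tens t u)).
Proof.
case E1: (typ s) => [[a b]|] // _; case E2: (typ t) => [[c d]|] // _.
case E3: (typ u) => [[e f]|] // _.
exact: nulR (ax_tassoc zeta E1 E2 E3).
Qed.
Lemma R_unitl t : typ t != None -> R (Tens (Id 0) t) 1 t.
Proof. by case E: (typ t) => [[a b]|] // _; apply: nulR (ax_unitl zeta E). Qed.
Lemma R_unitr t : typ t != None -> R (Tens t (Id 0)) 1 t.
Proof. by case E: (typ t) => [[a b]|] // _; apply: nulR (ax_unitr zeta E). Qed.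
Lemma R_tid a b : R (Tens (Id a) (Id b)) 1 (Id (a + b)).
Proof. exact: nulR (ax_tid n zeta a b). Qed.
Lemma R_inter s t s' t' : typ (Comp s s') != None -> typ (Comp t t') != None ->
  R (Comp (Tens s t) (Tens s' t')) 1 (Tens (Comp s s') (Comp t t')).
Proof.
rewrite /=; case E1: (typ s') => [[a b]|] //; case E2: (typ s) => [[b' c]|] //.
case: (b =P b') => [eb _|]//; subst b'.
case E3: (typ t') => [[a' b2]|] //; case E4: (typ t) => [[b2' c']|] //.
case: (b2 =P b2') => [eb _|]//; subst b2'.
exact: nulR (ax_interchange zeta E1 E2 E3 E4).
Qed.
Lemma R_fg : R (Comp Fg Gg) 1 (Id 0).
Proof. exact: nulR (rel_fg n zeta). Qed.
Lemma R_gf : R (Comp Gg Fg) 1 (Id n).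
Proof. exact: nulR (rel_gf n zeta). Qed.
Lemma R_twist : R (Tens (Id 1) Fg) zeta (Tens Fg (Id 1)).
Proof. exact: nulR (rel_twist n zeta). Qed.


Lemma typ_Comp t s a b c : typ s = Some (a, b) -> typ t = Some (b, c) ->
  typ (Comp t s) = Some (a, c).
Proof. by move=> h1 h2; rewrite /= h1 h2 eqxx. Qed.
Lemma typ_Tens s t a b c d : typ s = Some (a, b) -> typ t = Some (c, d) ->
  typ (Tens s t) = Some ((a + c)%N, (b + d)%N).
Proof. by move=> h1 h2; rewrite /= h1 h2. Qed.
Lemma typ_CompE t s a c : typ (Comp t s) = Some (a, c) ->
  exists b, typ s = Some (a, b) /\ typ t = Some (b, c).
Proof.
rewrite /=; case: (typ s) => [[a' b]|] //; case: (typ t) => [[b' c']|] //.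
by case: (b =P b') => // <- [<- <-]; exists b.
Qed.
Lemma typ_TensE s t x y : typ (Tens s t) = Some (x, y) ->
  exists a b c d, [/\ typ s = Some (a, b), typ t = Some (c, d), x = (a + c)%N & y = (b + d)%N].
Proof.
rewrite /=; case: (typ s) => [[a b]|] //; case: (typ t) => [[c d]|] // [<- <-].
by exists a, b, c, d.
Qed.
Lemma tyN t a b : typ t = Some (a, b) -> typ t != None.
Proof. by move->. Qed.

Lemma twistf m : R (Tens (Id m) Fg) (zeta ^+ m) (Tens Fg (Id m)).
Proof.
elim: m => [|m IH].
  by rewrite expr0; apply: R1l (R_unitl _) (R1s (R_unitr _)).
rewrite exprSr.
apply: R1l; first exact: R_tensl (R1s (R_tid 1 m)) _.
apply: R1l; first exact: R_tassoc.
apply: R_trans; first exact: R_tensr IH _.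
apply: R1l; first exact: R1s (R_tassoc _ _ _).
apply: R1r; first exact: R_tensl R_twist _.
apply: R1l; first exact: R_tassoc.
exact: R_tensr (R_tid 1 m) _.
Qed.


Ltac tc := by rewrite /= ?eqxx ?addn0 ?add0n ?eqxx /= ?eqxx ?addn0 ?add0n /= ?eqxx ?addn0 ?add0n /= ?eqxx.
Ltac tcc x y := by rewrite /= ?eqxx ?addn0 ?add0n ?(addnC x y) ?eqxx /= ?eqxx ?addn0 ?add0n ?(addnC x y) /= ?eqxx ?addn0 ?add0n ?(addnC x y) /= ?eqxx.

Lemma ff : R (Tens Fg Fg) (zeta ^+ n) (Tens Fg Fg).
Proof.
eapply R1l. eapply R_tensl. apply: R1s. exact: (R_idr (t := Fg) (a := n) (b := 0) erefl). done.
eapply R1l. eapply R_tensr. apply: R1s. exact: (R_idl (t := Fg) (a := n) (b := 0) erefl). tc.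
eapply R1l. apply: R1s. apply: R_inter; tc.
eapply R1l. eapply R_compr. apply: R_unitr. done. tc.
rewrite -[zeta ^+ n]mulr1. eapply R_trans. eapply R_compl. apply: twistf. tc.
eapply R1l. eapply R_compr. apply: R1s. apply: R_unitl. done. tc.
eapply R1l. apply: R_inter; tc.
eapply R1l. eapply R_tensl. exact: (R_idl (t := Fg) (a := n) (b := 0) erefl). tc.
eapply R_tensr. exact: (R_idr (t := Fg) (a := n) (b := 0) erefl). done.
Qed.

Lemma R_kill t c : c != 1 -> R t c t -> R t 0 t.
Proof.
move=> hc [a [b h]]; have := nul_wt h.
rewrite /wt /= !andbT => /andP [/eqP e1 _].
apply: (nulR (nul_lin1 (k := (1 - c)^-1) h _ _)); first by rewrite /wt /= e1 !eqxx.
move=> x; rewrite !coef_cons !coef_nil /=; field.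
by rewrite subr_eq0 eq_sym.
Qed.

Lemma R0u t u : R t 0 t -> typ u = typ t -> R t 0 u.
Proof.
move=> [a [b h]]; have := nul_wt h.
rewrite /wt /= !andbT => /andP [/eqP e1 _] e.
apply: (nulR (nul_lin1 (k := 1) h _ _)); first by rewrite /wt /= e e1 !eqxx.
move=> x; rewrite !coef_cons !coef_nil /=; ring.
Qed.

Lemma degenerate t u : zeta ^+ n != 1 -> typ t != None -> typ u = typ t -> R t 0 u.
Proof.
move=> hz ht hu; apply: R0u hu.
have h1 : R (Comp (Tens Fg Fg) (Tens Gg Gg)) 0 (Comp (Tens Fg Fg) (Tens Gg Gg)).
  eapply R_compr. exact: (R_kill hz ff). tc.
have h2 : R (Id 0) 1 (Comp (Tens Fg Fg) (Tens Gg Gg)).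
  eapply R1l. apply: R1s. exact: (R_tid 0 0).
  eapply R1l. eapply R_tensl. apply: R1s. exact: R_fg. done.
  eapply R1l. eapply R_tensr. apply: R1s. exact: R_fg. tc.
  apply: R1s. apply: R_inter; tc.
have h0 : R (Id 0) 0 (Id 0).
  by have := R_trans (R_trans h2 h1) (R1s h2); rewrite mul1r mulr1.
eapply R1l. apply: R1s. exact: (R_unitr ht).
eapply R1r. eapply R_tensr. exact: h0. exact: ht.
exact: R_unitr.
Qed.


Definition Rn t u := exists c, c != 0 /\ R t c u.
Lemma Rn1 t u : R t 1 u -> Rn t u.
Proof. by move=> h; exists 1; rewrite oner_neq0. Qed.
Lemma Rn_trans t u v : Rn t u -> Rn u v -> Rn t v.
Proof.
move=> [c [hc h1]] [d [hd h2]]; exists (c * d); split; first exact: mulf_neq0.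
exact: R_trans h1 h2.
Qed.
Lemma Rn_sym t u : Rn t u -> Rn u t.
Proof. move=> [c [hc h]]; exists c^-1; split; [exact: invr_neq0 | exact: R_sym]. Qed.
Lemma Rn1l t u v : R t 1 u -> Rn u v -> Rn t v.
Proof. by move=> h; apply: Rn_trans (Rn1 h). Qed.
Lemma Rn_compl w t u : Rn t u -> typ (Comp w t) != None -> Rn (Comp w t) (Comp w u).
Proof. by move=> [c [hc h]] hw; exists c; split => //; apply: R_compl. Qed.
Lemma Rn_compr w t u : Rn t u -> typ (Comp t w) != None -> Rn (Comp t w) (Comp u w).
Proof. by move=> [c [hc h]] hw; exists c; split => //; apply: R_compr. Qed.
Lemma Rn_tensl w t u : Rn t u -> typ w != None -> Rn (Tens t w) (Tens u w).
Proof. by move=> [c [hc h]] hw; exists c; split => //; apply: R_tensl. Qed.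
Lemma Rn_tensr w t u : Rn t u -> typ w != None -> Rn (Tens w t) (Tens w u).
Proof. by move=> [c [hc h]] hw; exists c; split => //; apply: R_tensr. Qed.
Lemma Rn_refl t : typ t != None -> Rn t t.
Proof. by move=> h; apply: Rn1; apply: R_refl. Qed.

Hypothesis zeta0 : zeta != 0.

Lemma twistfn m : Rn (Tens Fg (Id m)) (Tens (Id m) Fg).
Proof. apply: Rn_sym; exists (zeta ^+ m); split; [exact: expf_neq0 | exact: twistf]. Qed.

Lemma twistg m : Rn (Tens (Id m) Gg) (Tens Gg (Id m)).
Proof.
have hI : R (Id (m + n)) 1 (Comp (Tens Gg (Id m)) (Tens Fg (Id m))).
  rewrite addnC.
  eapply R1l. apply: R1s. exact: (R_tid n m).
  eapply R1l. eapply R_tensl. apply: R1s. exact: R_gf. done.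
  eapply R1l. eapply R_tensr. apply: R1s. exact: (R_idl (t := Id m) (a := m) (b := m) erefl). tc.
  apply: R1s. apply: R_inter; tc.
eapply Rn1l. apply: R1s. exact: (R_idl (t := Tens (Id m) Gg) (a := (m + 0)%N) (b := (m + n)%N) erefl).
eapply Rn1l. eapply R_compr. exact: hI. tc.
eapply Rn1l. apply: R_assoc. tcc m n.
eapply Rn_trans. eapply Rn_compl. eapply Rn_compr. apply: twistfn. tcc m n.
  tcc m n.
eapply Rn1l. eapply R_compl. apply: R_inter; tc. tcc m n.
eapply Rn1l. eapply R_compl. eapply R1l. eapply R_tensl. exact: (R_idl (t := Id m) (a := m) (b := m) erefl).
  tc. eapply R_tensr. exact: R_fg. done. tcc m n.
eapply Rn1l. eapply R_compl. apply: R_unitr. done. tcc m n.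
apply: Rn1. exact: (R_idr (t := Tens Gg (Id m)) (a := m) (b := (n + m)%N) erefl).
Qed.


Fixpoint Qx (q : nat) (Z : term) : term :=
  if q is q'.+1 then Tens Gg (Qx q' Z) else Z.

Lemma typ_Qx q Z a b : typ Z = Some (a, b) -> typ (Qx q Z) = Some (a, (q * n + b)%N).
Proof.
move=> h; elim: q => [|q IH] //=; rewrite IH /=.
by rewrite add0n mulSn addnA.
Qed.
Lemma typQI q x : typ (Qx q (Id x)) = Some (x, (q * n + x)%N).
Proof. exact: typ_Qx. Qed.
Lemma tyQ q Z : typ Z != None -> typ (Qx q Z) != None.
Proof. by case E: (typ Z) => [[a b]|] // _; rewrite (typ_Qx _ E). Qed.
Lemma QE q e Z : Qx q (Qx e Z) = Qx (q + e) Z.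
Proof. by elim: q => //= q ->. Qed.

Lemma QA q Z X : typ Z != None -> typ X != None -> R (Tens (Qx q Z) X) 1 (Qx q (Tens Z X)).
Proof.
move=> hZ hX; elim: q => [|q IH] /=.
  by apply: R_refl; move: hZ hX; rewrite /=; case: (typ Z) => [[]|]; case: (typ X) => [[]|].
eapply R1l. apply: R_tassoc => //. exact: tyQ.
by eapply R_tensr.
Qed.

Lemma QC q Z Z' : Rn Z Z' -> Rn (Qx q Z) (Qx q Z').
Proof. by move=> h; elim: q => [|q IH] //=; apply: Rn_tensr. Qed.

Lemma QB m q Z : typ Z != None -> Rn (Tens (Id m) (Qx q Z)) (Qx q (Tens (Id m) Z)).
Proof.
move=> hZ; elim: q => [|q IH] /=.
  by apply: Rn_refl; move: hZ; rewrite /=; case: (typ Z) => [[]|].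
eapply Rn1l. apply: R1s. apply: R_tassoc => //. exact: tyQ.
eapply Rn_trans. eapply Rn_tensl. exact: twistg. exact: tyQ.
eapply Rn1l. apply: R_tassoc => //. exact: tyQ.
by apply: Rn_tensr.
Qed.

Lemma QD q x Y y : typ Y = Some (y, x) -> R (Comp (Qx q (Id x)) Y) 1 (Qx q Y).
Proof.
move=> hY; elim: q => [|q IH] /=.
  exact: R_idl hY.
eapply R1l. eapply R_compl. apply: R1s. apply: R_unitl. by rewrite hY.
  by rewrite /= hY /= typQI /= !add0n eqxx.
eapply R1l. apply: R_inter => //. by rewrite /= hY typQI eqxx.
eapply R1l. eapply R_tensl. exact: (R_idr (t := Gg) (a := 0%N) (b := n) erefl).
  by rewrite /= hY typQI eqxx.
eapply R_tensr. exact: IH. done.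
Qed.

Lemma QL q r q' r' e rho : (r + r')%N = (e * n + rho)%N ->
  Rn (Comp (Tens (Qx q (Id r)) (Qx q' (Id r'))) (Qx e (Id rho))) (Qx (q + q' + e) (Id rho)).
Proof.
move=> hr.
have hT : Rn (Tens (Qx q (Id r)) (Qx q' (Id r'))) (Qx (q + q') (Id (r + r'))).
  eapply Rn1l. apply: QA => //. exact: tyQ.
  eapply Rn_trans. apply: QC. apply: QB. done.
  rewrite -QE. apply: QC. apply: QC. apply: Rn1. exact: R_tid.
rewrite hr in hT.
eapply Rn_trans. eapply Rn_compr. exact: hT.
  by rewrite /= !typQI /= hr eqxx.
rewrite -(QE (q + q') e). apply: Rn1. apply: QD. exact: typQI.
Qed.


Definition Ex t u := exists c, R t c u.
Lemma Ex_R t c u : R t c u -> Ex t u. Proof. by exists c. Qed.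
Lemma Ex_Rn t u : Rn t u -> Ex t u. Proof. by case=> c [_ h]; exists c. Qed.
Lemma Ex_trans t u v : Ex t u -> Ex u v -> Ex t v.
Proof. by move=> [c h1] [d h2]; exists (c * d); apply: R_trans h1 h2. Qed.
Lemma Ex_compl w t u : Ex t u -> typ (Comp w t) != None -> Ex (Comp w t) (Comp w u).
Proof. by move=> [c h] hw; exists c; apply: R_compl. Qed.
Lemma Ex_compr w t u : Ex t u -> typ (Comp t w) != None -> Ex (Comp t w) (Comp u w).
Proof. by move=> [c h] hw; exists c; apply: R_compr. Qed.
Lemma Ex_tensl w t u : Ex t u -> typ w != None -> Ex (Tens t w) (Tens u w).
Proof. by move=> [c h] hw; exists c; apply: R_tensl. Qed.
Lemma Ex_tensr w t u : Ex t u -> typ w != None -> Ex (Tens w t) (Tens w u).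
Proof. by move=> [c h] hw; exists c; apply: R_tensr. Qed.

Definition Qc a := Qx (a %/ n)%N (Id (a %% n)%N).
Arguments Qc : simpl never.
Lemma typQc a : typ (Qc a) = Some ((a %% n)%N, a).
Proof. by rewrite /Qc typQI -divn_eq. Qed.

Lemma typ_mod t a b : typ t = Some (a, b) -> (a %% n = b %% n)%N.
Proof.
elim: t a b => [k|||t IHt s IHs|s IHs t IHt] a b h.
- by case: h => <- <-.
- by case: h => <- <-; rewrite modnn mod0n.
- by case: h => <- <-; rewrite modnn mod0n.
- by case/typ_CompE: h => b0 [h1 h2]; rewrite (IHs _ _ h1) (IHt _ _ h2).
- case/typ_TensE: h => a1 [b1 [a2 [b2 [h1 h2 -> ->]]]].
  by rewrite -modnDm (IHs _ _ h1) (IHt _ _ h2) modnDm.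
Qed.

Hypothesis hn : (0 < n)%N.

Lemma QcD a1 a2 : let e := ((a1 %% n + a2 %% n) %/ n)%N in
  Qc (a1 + a2) = Qx (a1 %/ n + a2 %/ n + e)%N (Id ((a1 %% n + a2 %% n) %% n))%N.
Proof.
have E : (a1 + a2 = (a1 %/ n + a2 %/ n) * n + (a1 %% n + a2 %% n))%N.
  by rewrite mulnDl {1}(divn_eq a1 n) {1}(divn_eq a2 n); ring.
by rewrite /Qc E divnMDl // modnMDl.
Qed.

Lemma M t a b : typ t = Some (a, b) -> Ex (Comp t (Qc a)) (Qc b).
Proof.
elim: t a b => [k|||t IHt s IHs|s IHs t IHt] a b h.
- case: h => <- <-; apply: Ex_R; exact: R_idl (typQc k).
- case: h => <- <-; rewrite /Qc divnn hn modnn div0n mod0n /=.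
  exists 1. eapply R1l. eapply R_compl. apply: R_unitr. done. tc. exact: R_fg.
- case: h => <- <-; rewrite /Qc divnn hn modnn div0n mod0n /=.
  exists 1. eapply R1l. exact: (R_idr (t := Gg) (a := 0%N) (b := n) erefl).
  apply: R1s. by apply: R_unitr.
- case/typ_CompE: h => b0 [hs ht].
  apply: Ex_trans. apply: Ex_R. apply: R_assoc. by rewrite /= typQc hs eqxx ht eqxx.
  apply: Ex_trans. apply: Ex_compl. exact: IHs hs. by rewrite /= typQc hs eqxx ht eqxx.
  exact: IHt ht.
- case/typ_TensE: h => a1 [b1 [a2 [b2 [hs ht -> ->]]]].
  have m1 := typ_mod hs; have m2 := typ_mod ht.
  set e := ((a1 %% n + a2 %% n) %/ n)%N; set rho := ((a1 %% n + a2 %% n) %% n)%N.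
  have her : (a1 %% n + a2 %% n = e * n + rho)%N by rewrite /e /rho -divn_eq.
  have L1 := QL (a1 %/ n)%N (a2 %/ n)%N her.
  have L2 := QL (b1 %/ n)%N (b2 %/ n)%N her.
  rewrite m1 m2 in L2.
  have tA := typQc (a1 + a2); have tB := typQc (b1 + b2).
  have hm1 := esym m1; have hm2 := esym m2.
  rewrite (QcD a1 a2) -/e -/rho in tA.
  rewrite (QcD b1 b2) hm1 hm2 -/e -/rho in tB.
  rewrite (QcD a1 a2) (QcD b1 b2) hm1 hm2 -/e -/rho.
  rewrite -/(Qc a1) -/(Qc a2) in L1; rewrite -/(Qc b1) -/(Qc b2) in L2.
  apply: Ex_trans. apply: Ex_compl. apply: Ex_Rn. apply: Rn_sym. exact: L1.
    by rewrite /= ?tA ?tB ?typQc ?typQI ?hs ?ht /= ?hm1 ?hm2 ?her ?eqxx /= ?hm1 ?hm2 ?her ?eqxx /= ?hm1 ?hm2 ?her ?eqxx /= ?eqxx.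
  apply: Ex_trans. apply: Ex_R. apply: R1s. apply: R_assoc.
    by rewrite /= ?tA ?tB ?typQc ?typQI ?hs ?ht /= ?hm1 ?hm2 ?her ?eqxx /= ?hm1 ?hm2 ?her ?eqxx /= ?hm1 ?hm2 ?her ?eqxx /= ?eqxx.
  apply: Ex_trans. apply: Ex_compr. apply: Ex_R. apply: R_inter.
    by rewrite /= ?tA ?tB ?typQc ?typQI ?hs ?ht /= ?hm1 ?hm2 ?her ?eqxx /= ?hm1 ?hm2 ?her ?eqxx /= ?hm1 ?hm2 ?her ?eqxx /= ?eqxx. by rewrite /= ?tA ?tB ?typQc ?typQI ?hs ?ht /= ?hm1 ?hm2 ?her ?eqxx /= ?hm1 ?hm2 ?her ?eqxx /= ?hm1 ?hm2 ?her ?eqxx /= ?eqxx. by rewrite /= ?tA ?tB ?typQc ?typQI ?hs ?ht /= ?hm1 ?hm2 ?her ?eqxx /= ?hm1 ?hm2 ?her ?eqxx /= ?hm1 ?hm2 ?her ?eqxx /= ?eqxx.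
  apply: Ex_trans. apply: Ex_compr. apply: Ex_tensl. exact: IHs hs.
    by rewrite /= ?tA ?tB ?typQc ?typQI ?hs ?ht /= ?hm1 ?hm2 ?her ?eqxx /= ?hm1 ?hm2 ?her ?eqxx /= ?hm1 ?hm2 ?her ?eqxx /= ?eqxx. by rewrite /= ?tA ?tB ?typQc ?typQI ?hs ?ht /= ?hm1 ?hm2 ?her ?eqxx /= ?hm1 ?hm2 ?her ?eqxx /= ?hm1 ?hm2 ?her ?eqxx /= ?eqxx.
  apply: Ex_trans. apply: Ex_compr. apply: Ex_tensr. exact: IHt ht.
    by rewrite /= ?tA ?tB ?typQc ?typQI ?hs ?ht /= ?hm1 ?hm2 ?her ?eqxx /= ?hm1 ?hm2 ?her ?eqxx /= ?hm1 ?hm2 ?her ?eqxx /= ?eqxx. by rewrite /= ?tA ?tB ?typQc ?typQI ?hs ?ht /= ?hm1 ?hm2 ?her ?eqxx /= ?hm1 ?hm2 ?her ?eqxx /= ?hm1 ?hm2 ?her ?eqxx /= ?eqxx.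
  apply: Ex_Rn. exact: L2.
Qed.


Lemma typ_ftens l : typ (ftens l) = Some ((l * n)%N, 0%N).
Proof. by elim: l => [|l IH] //=; rewrite IH mulSn. Qed.

Lemma QF l : R (Comp (Qx l (Id 0)) (ftens l)) 1 (Id (l * n)).
Proof.
elim: l => [|l IH] /=.
  exact: (R_idl (t := Id 0) (a := 0%N) (b := 0%N) erefl).
eapply R1l. apply: R_inter. done. by rewrite /= typ_ftens typQI addn0 eqxx.
eapply R1l. eapply R_tensl. exact: R_gf. by rewrite /= typ_ftens typQI addn0 eqxx.
eapply R1l. eapply R_tensr. exact: IH. done.
by rewrite mulSn; apply: R_tid.
Qed.

Lemma main_nd t l : typ t = Some ((l * n)%N, 0%N) -> Ex t (ftens l).
Proof.
move=> ht; have := M ht.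
rewrite /Qc mulnK // modnMl div0n mod0n /= => hM.
apply: Ex_trans. apply: Ex_R. apply: R1s. exact: (R_idr ht).
apply: Ex_trans. apply: Ex_compl. apply: Ex_R. apply: R1s. exact: QF.
  by rewrite /= ?typ_ftens ?typQI ht ?addn0 !eqxx.
apply: Ex_trans. apply: Ex_R. apply: R1s. apply: R_assoc.
  by rewrite /= ?typ_ftens ?typQI ht ?addn0 !eqxx.
apply: Ex_trans. apply: Ex_compr. exact: hM. by rewrite /= ?typ_ftens ?typQI ht ?addn0 !eqxx.
apply: Ex_R. exact: (R_idl (typ_ftens l)).
Qed.

End Proof.

Lemma sum_lemma (K : fieldType) (n : nat) (zeta : K) k F (s : lc K) :
  (forall t, typ n t = Some (k, 0%N) -> Ex n zeta t F) -> typ n F = Some (k, 0%N) ->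
  wt n k 0 s -> exists c : K, hom_eq n zeta k 0 s [:: (c, F)].
Proof.
move=> hE hF; rewrite /hom_eq; elim: s => [|[x t] s IH] /=.
  move=> _; exists 0.
  have [a [b h]] := R_refl zeta (tyN hF).
  have := nul_wt h; rewrite /wt /= hF andbT => /andP [/eqP [ea eb] _]; subst a b.
  apply: (nul_lin1 (k := 0) h); first by rewrite /wt /= hF eqxx.
  by move=> y; rewrite !coef_cons !coef_nil /=; ring.
rewrite /wt /= => /andP [/eqP ht hs].
have [c' IHc] := IH hs.
have [c [a [b h]]] := hE _ ht.
have := nul_wt h; rewrite /wt /= ht andbT => /andP [/eqP [ea eb] _]; subst a b.
exists (x * c + c').
apply: (nul_lin (k := x) IHc h).
  by move: (nul_wt IHc); rewrite /wt /= !all_cat /= ht hF eqxx /= !andbT.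
move=> y; rewrite /= !coef_cons !coef_cat !coef_cons !coef_nil /=; ring.
Qed.

Unset Implicit Arguments.

Theorem mainTheorem11 (K : closedFieldType) (hK : [pchar K] =i pred0)
  (n : nat) (hn : (1 <= n)%N) (zeta : K) (k l : nat) (hk : k = (l * n)%N)
  (s : lc K) (hs : wt n k 0 s) :
  exists c : K, hom_eq n zeta k 0 s [:: (c, ftens l)].
Proof.
subst k; apply: sum_lemma hs; last exact: typ_ftens.
move=> t ht.
have [hz|hz] := eqVneq (zeta ^+ n) 1.
  have z0 : zeta != 0.
    apply/eqP => z0; move: hz; rewrite z0 expr0n eqn0Ngt hn /=.
    by move/eqP; rewrite eq_sym oner_eq0.
  exact: (@main_nd K n zeta z0 hn t l ht).
exists 0; apply: degenerate hz (tyN ht) _.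
by rewrite ht typ_ftens.
Qed.
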